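(* Assume the standing assumptions and let $\rho,\kappa>0$. Then $\theta_{\rho,\kappa}$ has a unique minimizer $p_{DS}^*$ on $\mathbb{R}^m$, and if $p^*$ is any minimizer of $\theta$ on $\mathbb{R}^m$ (i.e. an optimal solution of $(D)$), then $$\|p_{DS}^*\|^2\le \|p^*\|^2+\frac{2\rho}{\kappa}D_f .$$ In particular, if $\|p^*\|\le R$ for some $R>0$, $D_f>0$, and $\rho=\frac{\epsilon}{3D_f}$, $\kappa=\frac{2\epsilon}{3R^2}$ for some $\epsilon>0$, then $\|p_{DS}^*\|\le\sqrt2\,R$.
   Context: Standing assumptions: $\mathcal{H}$ is a real Hilbert space; $f:\mathcal{H}\to\mathbb{R}\cup\{+\infty\}$ is proper, convex, lower semicontinuous with bounded effective domain; $g:\mathbb{R}^m\to\mathbb{R}\cup\{+\infty\}$ is proper, lower semicontinuous and $\mu$-strongly convex for some $\mu>0$; $A:\mathcal{H}\to\mathbb{R}^m$ is linear and continuous with $A(\operatorname{dom} f)\cap\operatorname{dom} g\neq\emptyset$. $D_f:=\sup\{\tfrac12\|x\|^2:x\in\operatorname{dom} f\}$. $\theta(p):=f^*(A^*p)+g^*(-p)$ (Fenchel conjugates, $A^*$ adjoint). For $\rho>0$, $f_\rho^*(q):=\sup_{x\in\mathcal{H}}\{\langle q,x\rangle-f(x)-\frac\rho2\|x\|^2\}$, $\theta_\rho(p):=f_\rho^*(A^*p)+g^*(-p)$ and $\theta_{\rho,\kappa}(p):=\theta_\rho(p)+\frac\kappa2\|p\|^2$. *)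

(* Defs.v *)
From Stdlib Require Import Reals Lra ClassicalEpsilon.
From Stdlib Require Vectors.Fin.
Open Scope R_scope.

Inductive ER : Type := Fin (x : R) | PInf | MInf.

Definition ER_le (a b : ER) : Prop :=
  match a, b with
  | MInf, _ => True
  | _, PInf => True
  | Fin x, Fin y => x <= y
  | _, _ => False
  end.

(* addition; +oo is absorbing (only sums of values > -oo occur below) *)
Definition ER_add (a b : ER) : ER :=
  match a, b with
  | PInf, _ => PInf
  | _, PInf => PInf
  | MInf, _ => MInf
  | _, MInf => MInf
  | Fin x, Fin y => Fin (x + y)
  end.

Definition ER_sup (S : R -> Prop) : ER :=
  match excluded_middle_informative (exists x, S x) with
  | left Hne =>
      match excluded_middle_informative (bound S) with
      | left Hb => Fin (proj1_sig (completeness S Hb Hne))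
      | right _ => PInf
      end
  | right _ => MInf
  end.

Record Hilbert : Type := {
  car :> Type;
  hzero : car;
  hadd : car -> car -> car;
  hopp : car -> car;
  hscal : R -> car -> car;
  hinner : car -> car -> R;
  hadd_assoc : forall x y z, hadd x (hadd y z) = hadd (hadd x y) z;
  hadd_comm : forall x y, hadd x y = hadd y x;
  hadd_0 : forall x, hadd x hzero = x;
  hadd_opp : forall x, hadd x (hopp x) = hzero;
  hscal_assoc : forall a b x, hscal a (hscal b x) = hscal (a * b) x;
  hscal_1 : forall x, hscal 1 x = x;
  hscal_distr_l : forall a x y, hscal a (hadd x y) = hadd (hscal a x) (hscal a y);
  hscal_distr_r : forall a b x, hscal (a + b) x = hadd (hscal a x) (hscal b x);
  hinner_sym : forall x y, hinner x y = hinner y x;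
  hinner_add_l : forall x y z, hinner (hadd x y) z = hinner x z + hinner y z;
  hinner_scal_l : forall a x y, hinner (hscal a x) y = a * hinner x y;
  hinner_pos : forall x, 0 <= hinner x x;
  hinner_def : forall x, hinner x x = 0 -> x = hzero;
  hcomplete : forall u : nat -> car,
    (forall eps, eps > 0 -> exists N, forall n k, (n >= N)%nat -> (k >= N)%nat ->
        sqrt (hinner (hadd (u n) (hopp (u k))) (hadd (u n) (hopp (u k)))) < eps) ->
    exists l, Un_cv (fun n => sqrt (hinner (hadd (u n) (hopp l)) (hadd (u n) (hopp l)))) 0
}.

Arguments hzero {h}. Arguments hadd {h}. Arguments hopp {h}.
Arguments hscal {h}. Arguments hinner {h}.

Definition hnorm {H : Hilbert} (x : H) : R := sqrt (hinner x x).
Definition hdist {H : Hilbert} (x y : H) : R := hnorm (hadd x (hopp y)).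

Definition Rm (m : nat) : Type := Fin.t m -> R.

Fixpoint fsum (m : nat) : (Fin.t m -> R) -> R :=
  match m with
  | O => fun _ => 0
  | S n => fun v => v Fin.F1 + fsum n (fun i => v (Fin.FS i))
  end.

Definition rm_add {m} (p q : Rm m) : Rm m := fun i => p i + q i.
Definition rm_opp {m} (p : Rm m) : Rm m := fun i => - p i.
Definition rm_scal {m} (a : R) (p : Rm m) : Rm m := fun i => a * p i.
Definition rm_inner {m} (p q : Rm m) : R := fsum m (fun i => p i * q i).
Definition rm_norm {m} (p : Rm m) : R := sqrt (rm_inner p p).
Definition rm_dist {m} (p q : Rm m) : R := rm_norm (rm_add p (rm_opp q)).

Definition in_dom {X : Type} (h : X -> ER) (x : X) : Prop := exists a, h x = Fin a.

Definition proper {X : Type} (h : X -> ER) : Prop :=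
  (forall x, h x <> MInf) /\ exists x, in_dom h x.

Definition lsc {X : Type} (d : X -> X -> R) (h : X -> ER) : Prop :=
  forall (c : R) (x : X) (u : nat -> X),
    (forall n, ER_le (h (u n)) (Fin c)) ->
    Un_cv (fun n => d (u n) x) 0 ->
    ER_le (h x) (Fin c).

Definition convex_H {H : Hilbert} (f : H -> ER) : Prop :=
  forall (x y : H) (a b t : R), f x = Fin a -> f y = Fin b -> 0 <= t <= 1 ->
    ER_le (f (hadd (hscal t x) (hscal (1 - t) y))) (Fin (t * a + (1 - t) * b)).

Definition strongly_convex_Rm {m} (mu : R) (g : Rm m -> ER) : Prop :=
  forall (x y : Rm m) (a b t : R), g x = Fin a -> g y = Fin b -> 0 <= t <= 1 ->
    ER_le (g (rm_add (rm_scal t x) (rm_scal (1 - t) y)))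
          (Fin (t * a + (1 - t) * b
                - mu / 2 * t * (1 - t) * (rm_norm (rm_add x (rm_opp y)))^2)).

Definition bounded_dom {H : Hilbert} (f : H -> ER) : Prop :=
  exists M, forall x, in_dom f x -> hnorm x <= M.

Definition linear_continuous {H : Hilbert} {m} (A : H -> Rm m) : Prop :=
  (forall x y, A (hadd x y) = rm_add (A x) (A y)) /\
  (forall a x, A (hscal a x) = rm_scal a (A x)) /\
  (exists C, forall x, rm_norm (A x) <= C * hnorm x).

Definition is_adjoint {H : Hilbert} {m} (A : H -> Rm m) (As : Rm m -> H) : Prop :=
  forall p x, hinner (As p) x = rm_inner p (A x).

(* D_f := sup { ||x||^2/2 : x in dom f }  (real; junk value 0 if not finite) *)
Definition Df {H : Hilbert} (f : H -> ER) : R :=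
  match ER_sup (fun v => exists x, in_dom f x /\ v = / 2 * (hnorm x)^2) with
  | Fin d => d
  | _ => 0
  end.

Definition conj_H {H : Hilbert} (f : H -> ER) (q : H) : ER :=
  ER_sup (fun v => exists x a, f x = Fin a /\ v = hinner q x - a).

Definition conj_rho_H {H : Hilbert} (rho : R) (f : H -> ER) (q : H) : ER :=
  ER_sup (fun v => exists x a, f x = Fin a /\ v = hinner q x - a - rho / 2 * (hnorm x)^2).

Definition conj_Rm {m} (g : Rm m -> ER) (p : Rm m) : ER :=
  ER_sup (fun v => exists y a, g y = Fin a /\ v = rm_inner p y - a).

Definition theta {H : Hilbert} {m} (f : H -> ER) (g : Rm m -> ER) (As : Rm m -> H)
  (p : Rm m) : ER :=
  ER_add (conj_H f (As p)) (conj_Rm g (rm_opp p)).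

Definition theta_rho {H : Hilbert} {m} (rho : R) (f : H -> ER) (g : Rm m -> ER)
  (As : Rm m -> H) (p : Rm m) : ER :=
  ER_add (conj_rho_H rho f (As p)) (conj_Rm g (rm_opp p)).

Definition theta_rho_kappa {H : Hilbert} {m} (rho kappa : R) (f : H -> ER)
  (g : Rm m -> ER) (As : Rm m -> H) (p : Rm m) : ER :=
  ER_add (theta_rho rho f g As p) (Fin (kappa / 2 * (rm_norm p)^2)).

Definition is_minimizer {X : Type} (h : X -> ER) (x : X) : Prop :=
  forall y, ER_le (h x) (h y).

(* Main.v *)
Require Import Defs.
From Stdlib Require Import Reals Lra Psatz ClassicalEpsilon FunctionalExtensionality.
From Stdlib Require Vectors.Fin.
Open Scope R_scope.

Lemma hinner_add_r (X : Hilbert) (x y z : X) : hinner x (hadd y z) = hinner x y + hinner x z.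
Proof. rewrite (hinner_sym X x), (hinner_sym X x y), (hinner_sym X x z). apply hinner_add_l. Qed.

Lemma hinner_scal_r (X : Hilbert) a (x y : X) : hinner x (hscal a y) = a * hinner x y.
Proof. rewrite (hinner_sym X x), (hinner_sym X x y). apply hinner_scal_l. Qed.

Lemma hadd_0l (X : Hilbert) (x : X) : hadd hzero x = x.
Proof. rewrite hadd_comm. apply hadd_0. Qed.

Lemma hscal_0 (X : Hilbert) (x : X) : hscal 0 x = hzero.
Proof.
  assert (E : hscal 0 x = hadd (hscal 0 x) (hscal 0 x)).
  { rewrite <- hscal_distr_r. f_equal. ring. }
  set (y := hscal 0 x) in *.
  assert (E2 : hadd y (hopp y) = hadd (hadd y y) (hopp y)) by (rewrite <- E; reflexivity).
  rewrite <- hadd_assoc, hadd_opp, hadd_0 in E2. symmetry; exact E2.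
Qed.

Lemma hopp_unique (X : Hilbert) (x y : X) : hadd x y = hzero -> y = hopp x.
Proof.
  intro E.
  rewrite <- (hadd_0 X y), <- (hadd_opp X x), hadd_assoc, (hadd_comm X y x), E, hadd_0l.
  reflexivity.
Qed.

Lemma hopp_scal (X : Hilbert) (x : X) : hopp x = hscal (-1) x.
Proof.
  symmetry. apply hopp_unique.
  rewrite <- (hscal_1 X x) at 1. rewrite <- hscal_distr_r.
  replace (1 + -1) with 0 by ring. apply hscal_0.
Qed.

Lemma hinner_opp_l (X : Hilbert) (x y : X) : hinner (hopp x) y = - hinner x y.
Proof. rewrite hopp_scal, hinner_scal_l. ring. Qed.

Lemma hinner_opp_r (X : Hilbert) (x y : X) : hinner x (hopp y) = - hinner x y.
Proof. rewrite hopp_scal, hinner_scal_r. ring. Qed.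

Lemma hinner_zero_l (X : Hilbert) (y : X) : hinner hzero y = 0.
Proof. rewrite <- (hscal_0 X hzero), hinner_scal_l. ring. Qed.

Lemma hsub_zero_eq (X : Hilbert) (x y : X) : hadd x (hopp y) = hzero -> x = y.
Proof.
  intro E. apply (f_equal (fun z => hadd z y)) in E.
  rewrite <- hadd_assoc, (hadd_comm X (hopp y) y), hadd_opp, hadd_0, hadd_0l in E. exact E.
Qed.

Lemma hnorm_sq (X : Hilbert) (x : X) : hnorm x ^ 2 = hinner x x.
Proof. unfold hnorm. apply pow2_sqrt. apply hinner_pos. Qed.

Ltac hexp := repeat (rewrite ?hinner_add_l, ?hinner_add_r, ?hinner_scal_l, ?hinner_scal_r,
   ?hinner_opp_l, ?hinner_opp_r).
Ltac hexp_in H := repeat (rewrite ?hinner_add_l, ?hinner_add_r, ?hinner_scal_l, ?hinner_scal_r,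
   ?hinner_opp_l, ?hinner_opp_r in H).

Lemma le_eps (a c K : R) : 0 <= K -> (forall d, d > 0 -> a <= c + d * K) -> a <= c.
Proof.
  intros HK H. destruct (Rle_dec a c) as [h|h]; auto. exfalso.
  assert (Hd : (a - c) / (2 * (K + 1)) > 0).
  { apply Rdiv_lt_0_compat; lra. }
  specialize (H _ Hd).
  assert ((a - c) / (2 * (K + 1)) * K < a - c).
  { apply Rmult_lt_reg_r with (2 * (K+1)). lra.
    unfold Rdiv. field_simplify; try lra. nra. }
  lra.
Qed.

Lemma quad_nonneg (A B : R) : 0 <= B -> (forall t, 0 < t <= 1 -> 0 <= 2 * t * A + t * t * B) -> 0 <= A.
Proof.
  intros HB H. destruct (Rle_dec 0 A) as [h|h]; auto. exfalso.
  set (t := - A / (B - A)).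
  assert (Ht : 0 < t <= 1).
  { unfold t; split. apply Rdiv_lt_0_compat; lra.
    apply Rmult_le_reg_r with (B - A). lra. unfold Rdiv. rewrite Rmult_assoc, Rinv_l; lra. }
  specialize (H t Ht).
  assert (E : 2 * A + t * B = A * (B - 2 * A) / (B - A)).
  { unfold t. field. lra. }
  assert (A * (B - 2 * A) / (B - A) < 0).
  { unfold Rdiv. apply Rmult_neg_pos. nra. apply Rinv_0_lt_compat. lra. }
  assert (t * (2 * A + t * B) < 0) by (rewrite E; nra).
  nra.
Qed.
Lemma ER_sup_fin (S : R -> Prop) : (exists x, S x) -> bound S ->
  exists s, ER_sup S = Fin s /\ is_lub S s.
Proof.
  intros Hne Hb. unfold ER_sup.
  destruct (excluded_middle_informative (exists x, S x)) as [h1|h1]; [|tauto].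
  destruct (excluded_middle_informative (bound S)) as [h2|h2]; [|tauto].
  destruct (completeness S h2 h1) as [s Hs]. simpl. exists s; auto.
Qed.

Lemma ER_sup_inf (S : R -> Prop) : (exists x, S x) -> ~ bound S -> ER_sup S = PInf.
Proof.
  intros Hne Hb. unfold ER_sup.
  destruct (excluded_middle_informative (exists x, S x)) as [h1|h1]; [|tauto].
  destruct (excluded_middle_informative (bound S)) as [h2|h2]; tauto.
Qed.

Lemma ER_sup_notM (S : R -> Prop) : (exists x, S x) -> ER_sup S <> MInf.
Proof.
  intros Hne. destruct (excluded_middle_informative (bound S)) as [h|h].
  - destruct (ER_sup_fin S Hne h) as [s [E _]]. rewrite E; discriminate.
  - rewrite ER_sup_inf; auto; discriminate.
Qed.

Lemma ER_sup_le (S : R -> Prop) c : (exists x, S x) ->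
  (ER_le (ER_sup S) (Fin c) <-> forall s, S s -> s <= c).
Proof.
  intros Hne. destruct (excluded_middle_informative (bound S)) as [h|h].
  - destruct (ER_sup_fin S Hne h) as [s [E [H1 H2]]]. rewrite E. simpl. split.
    + intros Hsc v Hv. specialize (H1 v Hv). lra.
    + intros Hv. apply H2. intros v Hv'. auto.
  - rewrite ER_sup_inf; auto. simpl. split; [tauto|].
    intros Hv. exfalso. apply h. exists c. intros v Hv'. auto.
Qed.

Lemma ER_add2_le (S T : R -> Prop) c : (exists x, S x) -> (exists x, T x) ->
  (ER_le (ER_add (ER_sup S) (ER_sup T)) (Fin c) <-> forall s t, S s -> T t -> s + t <= c).
Proof.
  intros HS HT.
  destruct (excluded_middle_informative (bound S)) as [hS|hS].
  - destruct (ER_sup_fin S HS hS) as [s [E [H1 H2]]]. rewrite E.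
    destruct (excluded_middle_informative (bound T)) as [hT|hT].
    + destruct (ER_sup_fin T HT hT) as [t [E' [H1' H2']]]. rewrite E'. simpl. split.
      * intros Hc a b Ha Hb. specialize (H1 a Ha). specialize (H1' b Hb). lra.
      * intros Hc.
        assert (Ht : t <= c - s).
        { apply H2'. intros b Hb.
          assert (s <= c - b). { apply H2. intros a Ha. specialize (Hc a b Ha Hb). lra. }
          lra. }
        lra.
    + rewrite ER_sup_inf; auto. simpl. split; [tauto|]. intros Hc. exfalso. apply hT.
      destruct HS as [a Ha]. exists (c - a). intros b Hb. specialize (Hc a b Ha Hb). lra.
  - rewrite ER_sup_inf; auto. simpl. split; [tauto|]. intros Hc. exfalso. apply hS.
    destruct HT as [b Hb]. exists (c - b). intros a Ha. specialize (Hc a b Ha Hb). lra.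
Qed.

Lemma ER_add2_notM (S T : R -> Prop) : (exists x, S x) -> (exists x, T x) ->
  ER_add (ER_sup S) (ER_sup T) <> MInf.
Proof.
  intros HS HT. pose proof (ER_sup_notM S HS). pose proof (ER_sup_notM T HT).
  destruct (ER_sup S); destruct (ER_sup T); simpl; congruence.
Qed.

Lemma ER_add_fin_le (Y : ER) K c : Y <> MInf ->
  (ER_le (ER_add Y (Fin K)) (Fin c) <-> ER_le Y (Fin (c - K))).
Proof. intros h. destruct Y; simpl; try tauto; try congruence. split; intros; lra. Qed.

Lemma ER_add3_le (S T : R -> Prop) K c : (exists x, S x) -> (exists x, T x) ->
  (ER_le (ER_add (ER_add (ER_sup S) (ER_sup T)) (Fin K)) (Fin c) <->
   forall s t, S s -> T t -> s + t + K <= c).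
Proof.
  intros HS HT. rewrite ER_add_fin_le by (apply ER_add2_notM; auto).
  rewrite ER_add2_le by auto. split; intros H s t Hs Ht; specialize (H s t Hs Ht); lra.
Qed.

Lemma ER_add3_notM (S T : R -> Prop) K : (exists x, S x) -> (exists x, T x) ->
  ER_add (ER_add (ER_sup S) (ER_sup T)) (Fin K) <> MInf.
Proof.
  intros HS HT. pose proof (ER_add2_notM S T HS HT).
  destruct (ER_add (ER_sup S) (ER_sup T)); simpl; congruence.
Qed.

Lemma ER_le_trans a b c : ER_le a b -> ER_le b c -> ER_le a c.
Proof. destruct a, b, c; simpl; intros; auto; try lra; tauto. Qed.

Lemma ER_le_fin (Y : ER) c : Y <> MInf -> ER_le Y (Fin c) -> exists v, Y = Fin v /\ v <= c.
Proof. destruct Y; simpl; intros; try tauto; try congruence. exists x; auto. Qed.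
Lemma inner_eta (X : Hilbert) (w d : X) eta : eta > 0 ->
  hinner w d <= (eta * hinner w w + hinner d d / eta) / 2.
Proof.
  intros He. pose proof (hinner_pos X (hadd (hscal eta w) (hopp d))) as P.
  hexp_in P. rewrite (hinner_sym X d w) in P.
  apply Rmult_le_reg_l with (2 * eta). lra.
  replace (2 * eta * ((eta * hinner w w + hinner d d / eta) / 2))
    with (eta * eta * hinner w w + hinner d d) by (field; lra).
  nra.
Qed.

Lemma quad_diff (X : Hilbert) (zeta z v : X) (al : R) :
  al * hinner z z + hinner zeta z - (al * hinner v v + hinner zeta v) =
  hinner (hadd (hscal (2 * al) z) zeta) (hadd z (hopp v))
   - al * hinner (hadd z (hopp v)) (hadd z (hopp v)).
Proof.
  hexp. rewrite (hinner_sym X v z). ring.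
Qed.

Lemma sub_sym_sq (X : Hilbert) (x y : X) :
  hinner (hadd x (hopp y)) (hadd x (hopp y)) = hinner (hadd y (hopp x)) (hadd y (hopp x)).
Proof. hexp. rewrite (hinner_sym X y x). ring. Qed.

Lemma cv_small (X : Hilbert) (u : nat -> X) z : Un_cv (fun n => hdist (u n) z) 0 ->
  forall d, d > 0 -> exists N, forall n, (n >= N)%nat ->
    hinner (hadd (u n) (hopp z)) (hadd (u n) (hopp z)) < d * d.
Proof.
  intros Hc d Hd. destruct (Hc d Hd) as [N HN]. exists N. intros n Hn.
  specialize (HN n Hn). unfold Rdist, hdist, hnorm in HN.
  rewrite Rminus_0_r in HN. rewrite Rabs_right in HN by (apply Rle_ge, sqrt_pos).
  pose proof (hinner_pos X (hadd (u n) (hopp z))).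
  rewrite <- (sqrt_sqrt (hinner _ _)) by auto.
  pose proof (sqrt_pos (hinner (hadd (u n) (hopp z)) (hadd (u n) (hopp z)))). nra.
Qed.

Lemma quad_lsc (X : Hilbert) (zeta : X) (al be c : R) (u : nat -> X) (z : X) :
  0 <= al -> Un_cv (fun n => hdist (u n) z) 0 ->
  (forall n, al * hinner (u n) (u n) + hinner zeta (u n) + be <= c) ->
  al * hinner z z + hinner zeta z + be <= c.
Proof.
  intros Hal Hc Hu. set (w := hadd (hscal (2 * al) z) zeta).
  apply le_eps with (K := hinner w w + 1). pose proof (hinner_pos X w); lra.
  intros d Hd. destruct (cv_small X u z Hc d Hd) as [N HN].
  specialize (HN N (le_n N)). specialize (Hu N).
  pose proof (quad_diff X zeta z (u N) al) as E. fold w in E.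
  pose proof (inner_eta X w (hadd z (hopp (u N))) d Hd) as I.
  rewrite <- sub_sym_sq in I. rewrite <- sub_sym_sq in E.
  pose proof (hinner_pos X (hadd (u N) (hopp z))).
  set (e := hinner (hadd (u N) (hopp z)) (hadd (u N) (hopp z))) in *.
  assert (e / d <= d).
  { apply Rmult_le_reg_r with d. lra. unfold Rdiv. rewrite Rmult_assoc, Rinv_l; lra. }
  assert (0 <= al * e) by nra.
  assert (0 <= d * hinner w w) by (pose proof (hinner_pos X w); nra).
  replace (c + d * (hinner w w + 1)) with (c + d * hinner w w + d) by ring.
  lra.
Qed.
Lemma inv_small (n N : nat) : (0 < N)%nat -> (n >= N)%nat -> / (INR n + 1) <= / INR N.
Proof.
  intros h1 h2. apply Rinv_le_contravar. apply lt_0_INR; auto.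
  apply le_INR in h2. lra.
Qed.

Lemma Un_cv_shift (u : nat -> R) l N : Un_cv u l -> Un_cv (fun n => u (n + N)%nat) l.
Proof.
  intros H e He. destruct (H e He) as [M HM]. exists M. intros n Hn. apply HM. lia.
Qed.

Lemma min_strong (X : Hilbert) (T : X -> ER) (c : R) :
  c > 0 -> (forall x, T x <> MInf) -> (exists x v, T x = Fin v) ->
  (exists L, forall x v, T x = Fin v -> L <= v) ->
  (forall x y u w, T x = Fin u -> T y = Fin w ->
     ER_le (T (hadd (hscal (/2) x) (hscal (/2) y)))
       (Fin ((u + w) / 2 - c * hinner (hadd x (hopp y)) (hadd x (hopp y))))) ->
  lsc hdist T -> exists z, is_minimizer T z.
Proof.
  intros Hc HM [x0 [v0 Hx0]] [L HL] Hmid Hlsc.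
  set (V := fun v => exists x, T x = Fin (- v)).
  assert (Vb : bound V). { exists (- L). intros v [x Hx]. specialize (HL _ _ Hx). lra. }
  assert (Vne : exists v, V v). { exists (- v0). exists x0. rewrite Ropp_involutive. auto. }
  destruct (completeness V Vb Vne) as [s [Hs1 Hs2]].
  set (th := - s).
  assert (Hlow : forall x v, T x = Fin v -> th <= v).
  { intros x v Hx. assert (V (- v)) by (exists x; rewrite Ropp_involutive; auto).
    specialize (Hs1 _ H). unfold th. lra. }
  assert (Happ : forall e, e > 0 -> exists x v, T x = Fin v /\ v < th + e).
  { intros e He. apply NNPP. intro Hn.
    assert (is_upper_bound V (s - e)).
    { intros w [x Hx]. apply Rnot_lt_le. intro Hw. apply Hn. exists x, (- w).
      split; auto. unfold th. lra. }
    specialize (Hs2 _ H). lra. }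
  assert (Hseq : forall n : nat, exists x, exists v, T x = Fin v /\ v < th + / (INR n + 1)).
  { intro n. apply Happ. apply Rinv_0_lt_compat. pose proof (pos_INR n). lra. }
  set (xs := fun n => proj1_sig (constructive_indefinite_description _ (Hseq n))).
  assert (Hxs : forall n, exists v, T (xs n) = Fin v /\ v < th + / (INR n + 1)).
  { intro n. unfold xs. destruct (constructive_indefinite_description _ (Hseq n)). simpl. auto. }
  assert (Hest : forall n k, c * hinner (hadd (xs n) (hopp (xs k))) (hadd (xs n) (hopp (xs k)))
      <= (/ (INR n + 1) + / (INR k + 1)) / 2).
  { intros n k. destruct (Hxs n) as [vn [En Ln]]. destruct (Hxs k) as [vk [Ek Lk]].
    pose proof (Hmid _ _ _ _ En Ek) as Hm.
    destruct (ER_le_fin _ _ (HM _) Hm) as [w [Ew Lw]].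
    specialize (Hlow _ _ Ew). lra. }
  assert (Hcauchy : forall eps, eps > 0 -> exists N, forall n k, (n >= N)%nat -> (k >= N)%nat ->
        sqrt (hinner (hadd (xs n) (hopp (xs k))) (hadd (xs n) (hopp (xs k)))) < eps).
  { intros eps He. assert (Hce : 0 < c * (eps * eps)) by (apply Rmult_lt_0_compat; nra).
    destruct (archimed_cor1 _ Hce) as [N [HN1 HN2]]. exists N. intros n k Hn Hk.
    pose proof (inv_small n N HN2 Hn). pose proof (inv_small k N HN2 Hk).
    specialize (Hest n k).
    assert (hinner (hadd (xs n) (hopp (xs k))) (hadd (xs n) (hopp (xs k))) < eps * eps).
    { apply Rmult_lt_reg_l with c; auto. lra. }
    rewrite <- (sqrt_square eps) by lra. apply sqrt_lt_1_alt. split; auto. apply hinner_pos. }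
  destruct (hcomplete X xs Hcauchy) as [z Hz].
  assert (Hzle : forall e, e > 0 -> ER_le (T z) (Fin (th + e))).
  { intros e He. destruct (archimed_cor1 _ He) as [N [HN1 HN2]].
    apply (Hlsc (th + e) z (fun n => xs (n + N)%nat)).
    - intro n. destruct (Hxs (n + N)%nat) as [v [Ev Lv]]. rewrite Ev. simpl.
      pose proof (inv_small (n + N) N HN2 ltac:(lia)). lra.
    - exact (Un_cv_shift (fun n => hdist (xs n) z) 0 N Hz). }
  destruct (ER_le_fin _ _ (HM z) (Hzle 1 Rlt_0_1)) as [vz [Ez _]].
  assert (Hvz : vz <= th).
  { apply le_eps with (K := 1). lra. intros d Hd. specialize (Hzle d Hd). rewrite Ez in Hzle.
    simpl in Hzle. lra. }
  exists z. intro y. rewrite Ez. destruct (T y) eqn:Ey; simpl; auto.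
  - specialize (Hlow _ _ Ey). lra.
  - exact (HM y Ey).
Qed.
Lemma pair_eq {A B : Type} (a a' : A) (b b' : B) : a = a' -> b = b' -> (a, b) = (a', b').
Proof. intros; subst; auto. Qed.

Lemma sqrt_lt_sq a e : 0 <= a -> e > 0 -> a < e * e -> sqrt a < e.
Proof. intros. rewrite <- (sqrt_square e) by lra. apply sqrt_lt_1_alt. lra. Qed.

Definition PH (X : Hilbert) : Hilbert.
Proof.
  refine {| car := (X * R)%type;
            hzero := (hzero, 0);
            hadd := fun p q => (hadd (fst p) (fst q), snd p + snd q);
            hopp := fun p => (hopp (fst p), - snd p);
            hscal := fun a p => (hscal a (fst p), a * snd p);
            hinner := fun p q => hinner (fst p) (fst q) + snd p * snd q |}.
  - intros [] [] []; simpl; apply pair_eq; [apply hadd_assoc | ring].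
  - intros [] []; simpl; apply pair_eq; [apply hadd_comm | ring].
  - intros []; simpl; apply pair_eq; [apply hadd_0 | ring].
  - intros []; simpl; apply pair_eq; [apply hadd_opp | ring].
  - intros a b []; simpl; apply pair_eq; [apply hscal_assoc | ring].
  - intros []; simpl; apply pair_eq; [apply hscal_1 | ring].
  - intros a [] []; simpl; apply pair_eq; [apply hscal_distr_l | ring].
  - intros a b []; simpl; apply pair_eq; [apply hscal_distr_r | ring].
  - intros [] []; simpl. rewrite hinner_sym. ring.
  - intros [] [] []; simpl. rewrite hinner_add_l. ring.
  - intros a [] []; simpl. rewrite hinner_scal_l. ring.
  - intros []; simpl. pose proof (hinner_pos X c). nra.
  - intros [x s]; simpl. intro E. pose proof (hinner_pos X x). assert (s * s = 0) by nra.
    assert (hinner x x = 0) by nra. apply pair_eq. apply hinner_def; auto.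
    destruct (Rmult_integral _ _ H0); auto.
  - intros u Hu.
    set (ux := fun n => fst (u n)). set (us := fun n => snd (u n)).
    assert (Hx : forall eps, eps > 0 -> exists N, forall n k, (n >= N)%nat -> (k >= N)%nat ->
        sqrt (hinner (hadd (ux n) (hopp (ux k))) (hadd (ux n) (hopp (ux k)))) < eps).
    { intros eps He. destruct (Hu eps He) as [N HN]. exists N. intros n k Hn Hk.
      specialize (HN n k Hn Hk). eapply Rle_lt_trans; [|exact HN]. apply sqrt_le_1_alt.
      unfold ux. simpl. pose proof (Rle_0_sqr (snd (u n) + - snd (u k))). unfold Rsqr in *. lra. }
    destruct (hcomplete X ux Hx) as [lx Hlx].
    assert (Hs : Cauchy_crit us).
    { intros eps He. destruct (Hu eps He) as [N HN]. exists N. intros n k Hn Hk.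
      specialize (HN n k Hn Hk). unfold Rdist. eapply Rle_lt_trans; [|exact HN].
      rewrite <- sqrt_Rsqr_abs. apply sqrt_le_1_alt. unfold us, Rsqr. simpl.
      pose proof (hinner_pos X (hadd (fst (u n)) (hopp (fst (u k))))). nra. }
    destruct (R_complete us Hs) as [ls Hls].
    exists (lx, ls). intros eps He.
    assert (He2 : eps / 2 > 0) by lra.
    destruct (cv_small X ux lx Hlx (eps / 2) He2) as [N1 HN1].
    destruct (Hls (eps / 2) He2) as [N2 HN2].
    exists (N1 + N2)%nat. intros n Hn. unfold Rdist. rewrite Rminus_0_r.
    rewrite Rabs_right by (apply Rle_ge, sqrt_pos).
    specialize (HN1 n ltac:(lia)). specialize (HN2 n ltac:(lia)). unfold Rdist in HN2.
    simpl. apply sqrt_lt_sq.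
    + pose proof (hinner_pos X (hadd (fst (u n)) (hopp lx))).
      pose proof (Rle_0_sqr (snd (u n) + - ls)). unfold Rsqr in *. lra.
    + lra.
    + unfold ux, us in *. apply Rabs_def2 in HN2. destruct HN2.
      assert ((snd (u n) + - ls) * (snd (u n) + - ls) < eps / 2 * (eps / 2)).
      { set (t := snd (u n) + - ls). assert (-(eps/2) < t < eps/2) by (unfold t; lra). nra. }
      assert (eps / 2 * (eps / 2) = eps * eps / 4) by field.
      assert (0 < eps * eps) by nra. lra.
Defined.

Lemma PH_fst_le (X : Hilbert) (p q : PH X) : hdist (fst p) (fst q) <= hdist p q.
Proof.
  unfold hdist, hnorm. apply sqrt_le_1_alt. destruct p, q. simpl.
  pose proof (Rle_0_sqr (r + - r0)). unfold Rsqr in *. lra.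
Qed.

Lemma PH_snd_le (X : Hilbert) (p q : PH X) : Rabs (snd p - snd q) <= hdist p q.
Proof.
  unfold hdist, hnorm. rewrite <- sqrt_Rsqr_abs. apply sqrt_le_1_alt. destruct p, q. simpl.
  unfold Rsqr. pose proof (hinner_pos X (hadd c (hopp c0))). nra.
Qed.

Lemma squeeze0 (a b : nat -> R) : Un_cv b 0 -> (forall n, 0 <= a n <= b n) -> Un_cv a 0.
Proof.
  intros Hb Hab e He. destruct (Hb e He) as [N HN]. exists N. intros n Hn.
  specialize (HN n Hn). specialize (Hab n). unfold Rdist in *. rewrite Rminus_0_r in *.
  rewrite Rabs_right in HN by lra. rewrite Rabs_right by lra. lra.
Qed.
(* ---------- affine minorant via projection ---------- *)
Lemma mid_id (X : Hilbert) (p q z0 : X) :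
  hinner (hadd (hadd (hscal (/2) p) (hscal (/2) q)) (hopp z0))
         (hadd (hadd (hscal (/2) p) (hscal (/2) q)) (hopp z0)) =
  (hinner (hadd p (hopp z0)) (hadd p (hopp z0)) + hinner (hadd q (hopp z0)) (hadd q (hopp z0))) / 2
  - / 4 * hinner (hadd p (hopp q)) (hadd p (hopp q)).
Proof.
  hexp. rewrite (hinner_sym X q p), (hinner_sym X z0 p), (hinner_sym X z0 q). field.
Qed.

Lemma seg_id (X : Hilbert) (z zb z0 : X) t :
  hinner (hadd (hadd (hscal t z) (hscal (1 - t) zb)) (hopp z0))
         (hadd (hadd (hscal t z) (hscal (1 - t) zb)) (hopp z0))
  - hinner (hadd zb (hopp z0)) (hadd zb (hopp z0)) =
  2 * t * hinner (hadd zb (hopp z0)) (hadd z (hopp zb))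
  + t * t * hinner (hadd z (hopp zb)) (hadd z (hopp zb)).
Proof.
  hexp. rewrite (hinner_sym X zb z), (hinner_sym X z0 z), (hinner_sym X z0 zb). ring.
Qed.

Lemma quad_form (X : Hilbert) (p z0 : X) :
  hinner (hadd p (hopp z0)) (hadd p (hopp z0)) =
  1 * hinner p p + hinner (hscal (-2) z0) p + hinner z0 z0.
Proof. hexp. rewrite (hinner_sym X z0 p). ring. Qed.

Definition Epi {X : Hilbert} (f : X -> ER) (p : PH X) : Prop :=
  exists a, f (fst p) = Fin a /\ a <= snd p.

Definition Tproj {X : Hilbert} (f : X -> ER) (z0 : PH X) (p : PH X) : ER :=
  match excluded_middle_informative (Epi f p) with
  | left _ => Fin (hinner (hadd p (hopp z0)) (hadd p (hopp z0)))
  | right _ => PInf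
  end.

Lemma Tproj_in {X : Hilbert} (f : X -> ER) z0 p : Epi f p ->
  Tproj f z0 p = Fin (hinner (hadd p (hopp z0)) (hadd p (hopp z0))).
Proof. intro h. unfold Tproj. destruct (excluded_middle_informative (Epi f p)); tauto. Qed.

Lemma Tproj_fin {X : Hilbert} (f : X -> ER) z0 p v : Tproj f z0 p = Fin v ->
  Epi f p /\ v = hinner (hadd p (hopp z0)) (hadd p (hopp z0)).
Proof.
  unfold Tproj. destruct (excluded_middle_informative (Epi f p)); intro E; try discriminate.
  inversion E; auto.
Qed.

Lemma Epi_conv {X : Hilbert} (f : X -> ER) (p q : PH X) t : (forall x, f x <> MInf) -> convex_H f ->
  Epi f p -> Epi f q -> 0 <= t <= 1 -> Epi f (hadd (hscal t p) (hscal (1 - t) q)).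
Proof.
  intros HM Hc [a [Ea La]] [b [Eb Lb]] Ht.
  pose proof (Hc _ _ _ _ _ Ea Eb Ht) as H.
  destruct p as [x s], q as [y r]. simpl in *.
  destruct (f (hadd (hscal t x) (hscal (1 - t) y))) eqn:E; simpl in H; try tauto.
  - exists x0. simpl. split; auto.
    assert (t * a <= t * s) by (apply Rmult_le_compat_l; lra).
    assert ((1 - t) * b <= (1 - t) * r) by (apply Rmult_le_compat_l; lra). lra.
  - exfalso. exact (HM _ E).
Qed.

Lemma Epi_closed {X : Hilbert} (f : X -> ER) (u : nat -> PH X) z :
  proper f -> lsc hdist f -> (forall n, Epi f (u n)) ->
  Un_cv (fun n => hdist (u n) z) 0 -> Epi f z.
Proof.
  intros [Hp _] Hl Hu Hc.
  assert (Hz : forall e, e > 0 -> ER_le (f (fst z)) (Fin (snd z + e))).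
  { intros e He. destruct (Hc e He) as [N HN].
    apply (Hl (snd z + e) (fst z) (fun n => fst (u (n + N)%nat))).
    - intro n. destruct (Hu (n + N)%nat) as [a [Ea La]]. rewrite Ea. simpl.
      specialize (HN (n + N)%nat ltac:(lia)). unfold Rdist in HN. rewrite Rminus_0_r in HN.
      pose proof (PH_snd_le X (u (n + N)%nat) z).
      rewrite Rabs_right in HN by (apply Rle_ge; unfold hdist, hnorm; apply sqrt_pos).
      assert (Hab : Rabs (snd (u (n + N)%nat) - snd z) < e) by lra.
      apply Rabs_def2 in Hab. destruct Hab. lra.
    - apply squeeze0 with (b := fun n => hdist (u (n + N)%nat) z).
      + exact (Un_cv_shift (fun n => hdist (u n) z) 0 N Hc).
      + intro n. split. unfold hdist, hnorm. apply sqrt_pos. apply PH_fst_le. }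
  destruct (ER_le_fin _ _ (Hp (fst z)) (Hz 1 Rlt_0_1)) as [a [Ea _]].
  exists a. split; auto. apply le_eps with (K := 1). lra. intros d Hd.
  specialize (Hz d Hd). rewrite Ea in Hz. simpl in Hz. lra.
Qed.

Lemma minorant (X : Hilbert) (f : X -> ER) : proper f -> convex_H f -> lsc hdist f ->
  exists (al : X) (be : R), forall x a, f x = Fin a -> hinner al x + be <= a.
Proof.
  intros Hp Hc Hl. pose proof Hp as [HM [x0 [a0 Ea0]]].
  set (z0 := (x0, a0 - 1) : PH X).
  set (T := Tproj f z0).
  assert (HT0 : Epi f ((x0, a0) : PH X)) by (exists a0; simpl; split; auto; lra).
  assert (Hmin : exists zb, is_minimizer T zb).
  { apply (min_strong (PH X) T (/ 4)).
    - lra.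
    - intro p. unfold T, Tproj. destruct (excluded_middle_informative (Epi f p)); discriminate.
    - exists ((x0, a0) : PH X). eexists. unfold T. apply Tproj_in. auto.
    - exists 0. intros p v Hv. apply Tproj_fin in Hv. destruct Hv as [_ ->]. apply hinner_pos.
    - intros p q u w Hu Hw. apply Tproj_fin in Hu. apply Tproj_fin in Hw.
      destruct Hu as [Hu ->]. destruct Hw as [Hw ->].
      assert (Hm : Epi f (hadd (hscal (/2) p) (hscal (/2) q))).
      { replace (hscal (/2) q) with (hscal (1 - /2) q) by (f_equal; field).
        apply Epi_conv; auto. lra. }
      unfold T. rewrite (Tproj_in f z0 _ Hm). simpl. rewrite mid_id. lra.
    - intros c p u Hu Hcv.
      assert (Hu' : forall n, Epi f (u n) /\
        hinner (hadd (u n) (hopp z0)) (hadd (u n) (hopp z0)) <= c).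
      { intro n. specialize (Hu n). unfold T, Tproj in Hu.
        destruct (excluded_middle_informative (Epi f (u n))); simpl in Hu; tauto. }
      assert (Hp' : Epi f p).
      { apply (Epi_closed f u p); auto. intro n; apply Hu'. }
      unfold T. rewrite (Tproj_in f z0 _ Hp'). cbn [ER_le].
      rewrite quad_form. apply quad_lsc with (u := u); auto. lra.
      intro n. rewrite <- quad_form. apply Hu'. }
  destruct Hmin as [zb Hzb].
  assert (Hzb_in : Epi f zb).
  { pose proof (Hzb ((x0, a0) : PH X)) as h. unfold T in h. rewrite (Tproj_in f z0 _ HT0) in h.
    unfold T, Tproj in h. destruct (excluded_middle_informative (Epi f zb)); simpl in h; tauto. }
  assert (Hvar : forall z : PH X, Epi f z ->
     0 <= hinner (hadd zb (hopp z0)) (hadd z (hopp zb))).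
  { intros z Hz. apply quad_nonneg with (B := hinner (hadd z (hopp zb)) (hadd z (hopp zb))).
    apply hinner_pos. intros t Ht.
    assert (He : Epi f (hadd (hscal t z) (hscal (1 - t) zb))) by (apply Epi_conv; auto; lra).
    pose proof (Hzb (hadd (hscal t z) (hscal (1 - t) zb))) as h. unfold T in h.
    rewrite (Tproj_in f z0 _ He), (Tproj_in f z0 _ Hzb_in) in h. cbn [ER_le] in h.
    rewrite <- seg_id. lra. }
  destruct zb as [xb sb]. destruct Hzb_in as [ab [Eab Lab]]. simpl in Eab, Lab.
  assert (Hvar' : forall x a s, f x = Fin a -> a <= s ->
     0 <= hinner (hadd xb (hopp x0)) (hadd x (hopp xb)) + (sb + - (a0 - 1)) * (s + - sb)).
  { intros x a s Ea Ls. exact (Hvar ((x, s) : PH X) ltac:(exists a; simpl; auto)). }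
  assert (Hpos : sb - (a0 - 1) > 0).
  { pose proof (Hvar' xb ab (sb + 1) Eab ltac:(lra)) as h1.
    replace (hinner (hadd xb (hopp x0)) (hadd xb (hopp xb))) with 0 in h1
      by (rewrite hadd_opp, (hinner_sym X), hinner_zero_l; auto).
    destruct (Rle_lt_or_eq_dec (a0 - 1) sb) as [h|h]. nra. lra.
    exfalso. pose proof (Hvar' x0 a0 a0 Ea0 ltac:(lra)) as h2.
    rewrite <- h in h2. replace (a0 - 1 + - (a0 - 1)) with 0 in h2 by ring.
    assert (Hn : hinner (hadd xb (hopp x0)) (hadd xb (hopp x0)) = 0).
    { apply Rle_antisym; [|apply hinner_pos].
      assert (hinner (hadd xb (hopp x0)) (hadd x0 (hopp xb)) =
              - hinner (hadd xb (hopp x0)) (hadd xb (hopp x0))).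
      { hexp. rewrite (hinner_sym X x0 xb). ring. }
      lra. }
    apply hinner_def, hsub_zero_eq in Hn. subst xb. rewrite Ea0 in Eab. inversion Eab. lra. }
  set (c0 := sb - (a0 - 1)) in *.
  exists (hscal (- / c0) (hadd xb (hopp x0))), (sb + / c0 * hinner (hadd xb (hopp x0)) xb).
  intros x a Ea. pose proof (Hvar' x a a Ea (Rle_refl a)) as h.
  rewrite hinner_add_r, hinner_opp_r in h. rewrite hinner_scal_l.
  set (P := hinner (hadd xb (hopp x0)) x) in *. set (Q := hinner (hadd xb (hopp x0)) xb) in *.
  fold c0 in h.
  apply Rmult_le_reg_l with c0; auto.
  replace (c0 * (- / c0 * P + (sb + / c0 * Q))) with (- P + c0 * sb + Q) by (field; lra).
  assert (E : (sb + - (a0-1)) * (a + - sb) = c0 * a - c0 * sb) by (unfold c0; ring).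
  lra.
Qed.
Lemma fsum_ext m (u v : Fin.t m -> R) : (forall i, u i = v i) -> fsum m u = fsum m v.
Proof.
  induction m; simpl; intros H; auto. rewrite H. f_equal. apply IHm. intro; apply H.
Qed.

Lemma fsum_add m (u v : Fin.t m -> R) : fsum m (fun i => u i + v i) = fsum m u + fsum m v.
Proof.
  induction m; simpl. ring. rewrite (IHm (fun i => u (Fin.FS i)) (fun i => v (Fin.FS i))). ring.
Qed.

Lemma fsum_scal m a (u : Fin.t m -> R) : fsum m (fun i => a * u i) = a * fsum m u.
Proof.
  induction m; simpl. ring. rewrite (IHm (fun i => u (Fin.FS i))). ring.
Qed.

Lemma fsum_nonneg m (u : Fin.t m -> R) : (forall i, 0 <= u i) -> 0 <= fsum m u.
Proof.
  induction m; simpl; intros H. lra. pose proof (H Fin.F1).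
  pose proof (IHm (fun i => u (Fin.FS i)) (fun i => H _)). lra.
Qed.

Lemma fsum_ge_term m (u : Fin.t m -> R) i : (forall j, 0 <= u j) -> u i <= fsum m u.
Proof.
  induction m. inversion i. intros H. simpl.
  pattern i; apply Fin.caseS'.
  - pose proof (fsum_nonneg m (fun j => u (Fin.FS j)) (fun j => H _)). lra.
  - intro p. pose proof (IHm (fun j => u (Fin.FS j)) p (fun j => H _)). pose proof (H Fin.F1). simpl in *. lra.
Qed.

Lemma fsum_cv m (e : nat -> Fin.t m -> R) : (forall i, Un_cv (fun n => e n i) 0) ->
  Un_cv (fun n => fsum m (e n)) 0.
Proof.
  induction m; simpl; intros H.
  - intros eps He. exists O. intros. unfold Rdist. rewrite Rminus_0_r, Rabs_R0. lra.
  - replace 0 with (0 + 0) by ring. apply CV_plus. apply H.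
    apply (IHm (fun n i => e n (Fin.FS i))). intro i. apply H.
Qed.

Definition RmH (m : nat) : Hilbert.
Proof.
  refine {| car := Rm m; hzero := fun _ => 0; hadd := @rm_add m; hopp := @rm_opp m;
            hscal := @rm_scal m; hinner := @rm_inner m |}.
  - intros; apply functional_extensionality; intro; unfold rm_add; ring.
  - intros; apply functional_extensionality; intro; unfold rm_add; ring.
  - intros; apply functional_extensionality; intro; unfold rm_add; ring.
  - intros; apply functional_extensionality; intro; unfold rm_add, rm_opp; ring.
  - intros; apply functional_extensionality; intro; unfold rm_scal; ring.
  - intros; apply functional_extensionality; intro; unfold rm_scal; ring.
  - intros; apply functional_extensionality; intro; unfold rm_scal, rm_add; ring.
  - intros; apply functional_extensionality; intro; unfold rm_scal, rm_add; ring.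
  - intros; unfold rm_inner; apply fsum_ext; intro; ring.
  - intros; unfold rm_inner, rm_add. rewrite <- fsum_add. apply fsum_ext; intro; ring.
  - intros; unfold rm_inner, rm_scal. rewrite <- fsum_scal. apply fsum_ext; intro; ring.
  - intros; unfold rm_inner. apply fsum_nonneg. intro; apply Rle_0_sqr.
  - intros x Hx. apply functional_extensionality; intro i. unfold rm_inner in Hx.
    pose proof (fsum_ge_term m (fun i => x i * x i) i (fun j => Rle_0_sqr (x j))).
    simpl in H. pose proof (Rle_0_sqr (x i)). unfold Rsqr in *.
    assert (x i * x i = 0) by lra. destruct (Rmult_integral _ _ H1); auto.
  - intros u Hu.
    assert (Hc : forall i, Cauchy_crit (fun n => u n i)).
    { intros i eps He. destruct (Hu eps He) as [N HN]. exists N. intros n k Hn Hk.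
      specialize (HN n k Hn Hk). unfold Rdist. eapply Rle_lt_trans; [|exact HN].
      rewrite <- sqrt_Rsqr_abs. apply sqrt_le_1_alt. unfold Rsqr, rm_inner, rm_add, rm_opp.
      apply (fsum_ge_term m (fun j => (u n j + - u k j) * (u n j + - u k j)) i).
      intro j. apply Rle_0_sqr. }
    exists (fun i => proj1_sig (R_complete _ (Hc i))).
    set (l := fun i => proj1_sig (R_complete _ (Hc i))).
    assert (Hl : forall i, Un_cv (fun n => u n i) (l i)).
    { intro i. unfold l. destruct (R_complete _ (Hc i)). auto. }
    assert (Hs : Un_cv (fun n => rm_inner (rm_add (u n) (rm_opp l)) (rm_add (u n) (rm_opp l))) 0).
    { unfold rm_inner, rm_add, rm_opp.
      apply (fsum_cv m (fun n i => (u n i + - l i) * (u n i + - l i))).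
      intro i. replace 0 with ((l i + - l i) * (l i + - l i)) by ring.
      apply CV_mult; apply CV_plus; auto; intros e He; exists O; intros;
        unfold Rdist; rewrite Rminus_diag, Rabs_R0; lra. }
    intros eps He. assert (Hee : eps * eps > 0) by nra. destruct (Hs _ Hee) as [N HN].
    exists N. intros n Hn. specialize (HN n Hn). unfold Rdist in *. rewrite Rminus_0_r in *.
    pose proof (fsum_nonneg m (fun j => (u n j + - l j) * (u n j + - l j)) (fun j => Rle_0_sqr _)).
    rewrite Rabs_right by (apply Rle_ge, sqrt_pos).
    rewrite Rabs_right in HN by (unfold rm_inner, rm_add, rm_opp; lra).
    apply sqrt_lt_sq; [unfold rm_inner, rm_add, rm_opp; lra | lra | exact HN].
Defined.
Lemma rm_inner_sym m (p q : Rm m) : rm_inner p q = rm_inner q p.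
Proof. exact (hinner_sym (RmH m) p q). Qed.
Lemma rm_inner_opp_l m (p y : Rm m) : rm_inner (rm_opp p) y = - rm_inner p y.
Proof. exact (hinner_opp_l (RmH m) p y). Qed.
Lemma rm_inner_sub_r m (p z y : Rm m) : rm_inner p (rm_add z (rm_opp y)) = rm_inner p z - rm_inner p y.
Proof. pose proof (hinner_add_r (RmH m) p z (rm_opp y)). pose proof (hinner_opp_r (RmH m) p y).
  simpl in *. rewrite H, H0. ring. Qed.
Lemma rm_norm_sq m (p : Rm m) : rm_norm p ^ 2 = rm_inner p p.
Proof. exact (hnorm_sq (RmH m) p). Qed.

Lemma quad_mid (X : Hilbert) (p q z : X) k :
  hinner (hadd (hscal (/2) p) (hscal (/2) q)) z
   + k / 2 * hinner (hadd (hscal (/2) p) (hscal (/2) q)) (hadd (hscal (/2) p) (hscal (/2) q)) =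
  / 2 * (hinner p z + k / 2 * hinner p p) + / 2 * (hinner q z + k / 2 * hinner q q)
   - k / 8 * hinner (hadd p (hopp q)) (hadd p (hopp q)).
Proof. hexp. rewrite (hinner_sym X q p). field. Qed.

Lemma rm_quad_mid m (p q z : Rm m) k :
  rm_inner (rm_add (rm_scal (/2) p) (rm_scal (/2) q)) z
   + k / 2 * rm_inner (rm_add (rm_scal (/2) p) (rm_scal (/2) q)) (rm_add (rm_scal (/2) p) (rm_scal (/2) q)) =
  / 2 * (rm_inner p z + k / 2 * rm_inner p p) + / 2 * (rm_inner q z + k / 2 * rm_inner q q)
   - k / 8 * rm_inner (rm_add p (rm_opp q)) (rm_add p (rm_opp q)).
Proof. exact (quad_mid (RmH m) p q z k). Qed.

Lemma ThetaK_le {H : Hilbert} {m} (f : H -> ER) (g : Rm m -> ER) As rho kappa p c :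
  (exists x a, f x = Fin a) -> (exists y b, g y = Fin b) ->
  (ER_le (theta_rho_kappa rho kappa f g As p) (Fin c) <->
   forall x a y b, f x = Fin a -> g y = Fin b ->
     hinner (As p) x - a - rho / 2 * (hnorm x)^2 + (rm_inner (rm_opp p) y - b)
       + kappa / 2 * (rm_norm p)^2 <= c).
Proof.
  intros [x0 [a0 E0]] [y0 [b0 F0]]. unfold theta_rho_kappa, theta_rho, conj_rho_H, conj_Rm.
  rewrite ER_add3_le.
  - split.
    + intros Hc x a y b Ea Eb. apply Hc; eauto.
    + intros Hc s t [x [a [Ea ->]]] [y [b [Eb ->]]]. apply Hc; auto.
  - eexists; eauto.
  - eexists; eauto.
Qed.

Lemma ThetaK_notM {H : Hilbert} {m} (f : H -> ER) (g : Rm m -> ER) As rho kappa p :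
  (exists x a, f x = Fin a) -> (exists y b, g y = Fin b) ->
  theta_rho_kappa rho kappa f g As p <> MInf.
Proof.
  intros [x0 [a0 E0]] [y0 [b0 F0]]. unfold theta_rho_kappa, theta_rho, conj_rho_H, conj_Rm.
  apply ER_add3_notM; eexists; eauto.
Qed.

Lemma theta_le {H : Hilbert} {m} (f : H -> ER) (g : Rm m -> ER) As p c :
  (exists x a, f x = Fin a) -> (exists y b, g y = Fin b) ->
  (ER_le (theta f g As p) (Fin c) <->
   forall x a y b, f x = Fin a -> g y = Fin b ->
     hinner (As p) x - a + (rm_inner (rm_opp p) y - b) <= c).
Proof.
  intros [x0 [a0 E0]] [y0 [b0 F0]]. unfold theta, conj_H, conj_Rm.
  rewrite ER_add2_le.
  - split.
    + intros Hc x a y b Ea Eb. apply Hc; eauto.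
    + intros Hc s t [x [a [Ea ->]]] [y [b [Eb ->]]]. apply Hc; auto.
  - eexists; eauto.
  - eexists; eauto.
Qed.

Lemma theta_notM {H : Hilbert} {m} (f : H -> ER) (g : Rm m -> ER) As p :
  (exists x a, f x = Fin a) -> (exists y b, g y = Fin b) ->
  theta f g As p <> MInf.
Proof.
  intros [x0 [a0 E0]] [y0 [b0 F0]]. unfold theta, conj_H, conj_Rm.
  apply ER_add2_notM; eexists; eauto.
Qed.

Lemma Df_ge {H : Hilbert} (f : H -> ER) x : bounded_dom f -> in_dom f x ->
  / 2 * hnorm x ^ 2 <= Df f.
Proof.
  intros [M HM] Hx. unfold Df.
  set (S := fun v => exists x, in_dom f x /\ v = / 2 * (hnorm x)^2).
  assert (Hb : bound S).
  { exists (/ 2 * M ^ 2). intros v [y [Hy ->]]. specialize (HM y Hy).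
    assert (0 <= hnorm y) by (unfold hnorm; apply sqrt_pos). nra. }
  destruct (ER_sup_fin S ltac:(exists (/2 * hnorm x ^ 2); exists x; auto) Hb) as [d [E [H1 _]]].
  rewrite E. apply H1. exists x; auto.
Qed.
Theorem mainTheorem4
  (H : Hilbert) (m : nat) (f : H -> ER) (g : Rm m -> ER) (mu : R)
  (A : H -> Rm m) (As : Rm m -> H)
  (Hf_proper : proper f) (Hf_convex : convex_H f) (Hf_lsc : lsc hdist f)
  (Hf_bdd : bounded_dom f)
  (Hmu : mu > 0)
  (Hg_proper : proper g) (Hg_lsc : lsc rm_dist g) (Hg_sc : strongly_convex_Rm mu g)
  (HA : linear_continuous A) (HAs : is_adjoint A As)
  (Hqual : exists x, in_dom f x /\ in_dom g (A x))
  (rho kappa : R) (Hrho : rho > 0) (Hkappa : kappa > 0) :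
  (exists pDS, is_minimizer (theta_rho_kappa rho kappa f g As) pDS /\
     forall q, is_minimizer (theta_rho_kappa rho kappa f g As) q -> q = pDS)
  /\
  (forall pDS pstar,
     is_minimizer (theta_rho_kappa rho kappa f g As) pDS ->
     is_minimizer (theta f g As) pstar ->
     (rm_norm pDS)^2 <= (rm_norm pstar)^2 + 2 * rho / kappa * Df f)
  /\
  (forall (Rb eps : R) pDS pstar,
     Rb > 0 -> Df f > 0 -> eps > 0 ->
     rho = eps / (3 * Df f) -> kappa = 2 * eps / (3 * Rb^2) ->
     is_minimizer (theta_rho_kappa rho kappa f g As) pDS ->
     is_minimizer (theta f g As) pstar ->
     rm_norm pstar <= Rb ->
     rm_norm pDS <= sqrt 2 * Rb).
Proof.
  pose proof Hf_proper as [HfM [x0 [a0 Ea0]]].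
  pose proof Hg_proper as [HgM [y0 [b0 Eb0]]].
  assert (Fne : exists x a, f x = Fin a) by eauto.
  assert (Gne : exists y b, g y = Fin b) by eauto.
  set (Th := theta_rho_kappa rho kappa f g As).
  assert (Hphi : forall p x a y b,
     hinner (As p) x - a - rho / 2 * (hnorm x)^2 + (rm_inner (rm_opp p) y - b)
       + kappa / 2 * (rm_norm p)^2
     = rm_inner p (rm_add (A x) (rm_opp y)) + kappa / 2 * rm_inner p p
       + (- a - rho / 2 * (hnorm x)^2 - b)).
  { intros. rewrite (HAs p x), rm_inner_opp_l, rm_inner_sub_r, rm_norm_sq. ring. }
  assert (ThLe : forall p c, ER_le (Th p) (Fin c) -> forall x a y b, f x = Fin a -> g y = Fin b ->
     rm_inner p (rm_add (A x) (rm_opp y)) + kappa / 2 * rm_inner p p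
       + (- a - rho / 2 * (hnorm x)^2 - b) <= c).
  { intros p c Hc x a y b Ea Eb. rewrite <- Hphi.
    exact (proj1 (ThetaK_le f g As rho kappa p c Fne Gne) Hc x a y b Ea Eb). }
  assert (ThGe : forall p c, (forall x a y b, f x = Fin a -> g y = Fin b ->
     rm_inner p (rm_add (A x) (rm_opp y)) + kappa / 2 * rm_inner p p
       + (- a - rho / 2 * (hnorm x)^2 - b) <= c) -> ER_le (Th p) (Fin c)).
  { intros p c Hc. apply (proj2 (ThetaK_le f g As rho kappa p c Fne Gne)).
    intros x a y b Ea Eb. rewrite Hphi. auto. }
  assert (ThM : forall p, Th p <> MInf) by (intro p; apply ThetaK_notM; auto).
  destruct (minorant H f Hf_proper Hf_convex Hf_lsc) as [alf [bef Hminf]].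
  assert (Hgc : convex_H (H := RmH m) g).
  { intros x y a b t Ea Eb Ht. pose proof (Hg_sc x y a b t Ea Eb Ht) as h.
    change (ER_le (g (rm_add (rm_scal t x) (rm_scal (1 - t) y))) (Fin (t * a + (1 - t) * b))).
    destruct (g (rm_add (rm_scal t x) (rm_scal (1 - t) y))); simpl in *; auto.
    assert (0 <= mu / 2 * t * (1 - t) * rm_norm (rm_add x (rm_opp y)) ^ 2).
    { pose proof (pow2_ge_0 (rm_norm (rm_add x (rm_opp y)))).
      apply Rmult_le_pos; auto. apply Rmult_le_pos; [apply Rmult_le_pos|]; lra. }
    lra. }
  destruct (minorant (RmH m) g Hg_proper Hgc Hg_lsc) as [alg [beg Hming]].
  assert (Hming' : forall y b, g y = Fin b -> rm_inner alg y + beg <= b) by exact Hming.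
  destruct Hf_bdd as [M HM].
  assert (HxM : forall x a, f x = Fin a -> hinner x x <= M ^ 2).
  { intros x a Ea. specialize (HM x (ex_intro _ a Ea)). rewrite <- hnorm_sq.
    assert (0 <= hnorm x) by (unfold hnorm; apply sqrt_pos). nra. }
  set (p0 := rm_opp alg).
  set (w := hadd (As p0) (hopp alf)).
  set (C := (hinner w w + M ^ 2) / 2 - bef - beg + kappa / 2 * rm_inner p0 p0).
  assert (Hp0 : ER_le (Th p0) (Fin C)).
  { apply (proj2 (ThetaK_le f g As rho kappa p0 C Fne Gne)).
    intros x a y b Ea Eb.
    specialize (Hminf x a Ea). specialize (Hming' y b Eb). specialize (HxM x a Ea).
    pose proof (inner_eta H w x 1 Rlt_0_1) as Hw.
    assert (Ew : hinner w x = hinner (As p0) x - hinner alf x) by (unfold w; hexp; ring).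
    assert (Eg : rm_inner (rm_opp p0) y = rm_inner alg y)
      by (unfold p0; rewrite !rm_inner_opp_l; ring).
    rewrite rm_norm_sq, Eg.
    assert (0 <= rho / 2 * hnorm x ^ 2)
      by (pose proof (pow2_ge_0 (hnorm x)); apply Rmult_le_pos; lra).
    unfold C. rewrite Rdiv_1_r in Hw. lra. }
  assert (Hfin : forall q, ER_le (Th q) (Th p0) -> exists v, Th q = Fin v).
  { intros q Hq. destruct (ER_le_fin _ _ (ThM q) (ER_le_trans _ _ _ Hq Hp0)) as [v [Ev _]].
    eauto. }
  assert (Hmid : forall p q u v, Th p = Fin u -> Th q = Fin v ->
     ER_le (Th (rm_add (rm_scal (/2) p) (rm_scal (/2) q)))
       (Fin ((u + v) / 2 - kappa / 8 * rm_inner (rm_add p (rm_opp q)) (rm_add p (rm_opp q))))).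
  { intros p q u v Eu Ev. apply ThGe. intros x a y b Ea Eb.
    assert (Hu : ER_le (Th p) (Fin u)) by (rewrite Eu; simpl; lra).
    assert (Hv : ER_le (Th q) (Fin v)) by (rewrite Ev; simpl; lra).
    pose proof (ThLe p u Hu x a y b Ea Eb). pose proof (ThLe q v Hv x a y b Ea Eb).
    rewrite rm_quad_mid. lra. }
  assert (Hex : exists z, is_minimizer Th z).
  { apply (min_strong (RmH m) Th (kappa / 8)).
    - lra.
    - exact ThM.
    - destruct (ER_le_fin _ _ (ThM p0) Hp0) as [v [Ev _]]. eauto.
    - set (z := rm_add (A x0) (rm_opp y0)).
      exists ((- a0 - rho / 2 * (hnorm x0)^2 - b0) - rm_inner z z / kappa / 2).
      intros p v Ev.
      assert (Hv : ER_le (Th p) (Fin v)) by (rewrite Ev; simpl; lra).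
      pose proof (ThLe p v Hv x0 a0 y0 b0 Ea0 Eb0) as h. fold z in h.
      pose proof (inner_eta (RmH m) p (rm_opp z) kappa Hkappa) as Hi.
      pose proof (hinner_opp_r (RmH m) p z) as E1.
      pose proof (hinner_opp_l (RmH m) z (rm_opp z)) as E2.
      pose proof (hinner_opp_r (RmH m) z z) as E3.
      simpl in Hi, E1, E2, E3. rewrite E1, E2, E3 in Hi.
      assert (- - rm_inner z z / kappa = rm_inner z z / kappa) by (field; lra).
      lra.
    - exact Hmid.
    - intros c p u Hu Hcv. apply ThGe. intros x a y b Ea Eb.
      rewrite (rm_inner_sym _ p (rm_add (A x) (rm_opp y))).
      replace (rm_inner (rm_add (A x) (rm_opp y)) p + kappa / 2 * rm_inner p p
                + (- a - rho / 2 * hnorm x ^ 2 - b))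
        with (kappa / 2 * rm_inner p p + rm_inner (rm_add (A x) (rm_opp y)) p
                + (- a - rho / 2 * hnorm x ^ 2 - b)) by ring.
      apply (quad_lsc (RmH m) (rm_add (A x) (rm_opp y)) (kappa / 2)
               (- a - rho / 2 * hnorm x ^ 2 - b) c u p).
      + lra.
      + exact Hcv.
      + intro n. pose proof (ThLe (u n) c (Hu n) x a y b Ea Eb) as h.
        rewrite (rm_inner_sym _ (u n)) in h. simpl. lra. }
  destruct Hex as [pDS HpDS].
  assert (Hpart2 : forall p ps, is_minimizer Th p -> is_minimizer (theta f g As) ps ->
     (rm_norm p)^2 <= (rm_norm ps)^2 + 2 * rho / kappa * Df f).
  { intros p ps Hp Hps. destruct (Hfin p (Hp p0)) as [u Eu].
    assert (Hu : ER_le (Th p) (Fin u)) by (rewrite Eu; simpl; lra).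
    pose proof (proj1 (ThetaK_le f g As rho kappa p u Fne Gne) Hu) as Hpu.
    assert (Ht1 : ER_le (theta f g As p) (Fin (u - kappa / 2 * (rm_norm p)^2 + rho * Df f))).
    { apply (proj2 (theta_le f g As p _ Fne Gne)). intros x a y b Ea Eb.
      specialize (Hpu x a y b Ea Eb).
      pose proof (Df_ge f x (ex_intro _ M HM) (ex_intro _ a Ea)) as hD.
      assert (rho * (/ 2 * hnorm x ^ 2) <= rho * Df f) by (apply Rmult_le_compat_l; lra).
      assert (rho / 2 * hnorm x ^ 2 = rho * (/ 2 * hnorm x ^ 2)) by field.
      lra. }
    pose proof (ER_le_trans _ _ _ (Hps p) Ht1) as Ht2.
    pose proof (proj1 (theta_le f g As ps _ Fne Gne) Ht2) as Hps'.
    assert (Ht3 : ER_le (Th ps)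
       (Fin (u - kappa / 2 * (rm_norm p)^2 + rho * Df f + kappa / 2 * (rm_norm ps)^2))).
    { apply (proj2 (ThetaK_le f g As rho kappa ps _ Fne Gne)). intros x a y b Ea Eb.
      specialize (Hps' x a y b Ea Eb).
      assert (0 <= rho / 2 * hnorm x ^ 2)
        by (pose proof (pow2_ge_0 (hnorm x)); apply Rmult_le_pos; lra).
      lra. }
    pose proof (ER_le_trans _ _ _ (Hp ps) Ht3) as Hf. rewrite Eu in Hf. simpl in Hf.
    apply Rmult_le_reg_l with (kappa / 2). lra.
    replace (kappa / 2 * (rm_norm ps ^ 2 + 2 * rho / kappa * Df f))
      with (kappa / 2 * rm_norm ps ^ 2 + rho * Df f) by (field; lra).
    lra. }
  split; [|split].
  - exists pDS. split; auto. intros q Hq.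
    destruct (Hfin pDS (HpDS p0)) as [v1 E1]. destruct (Hfin q (Hq p0)) as [v2 E2].
    pose proof (HpDS q) as h1. pose proof (Hq pDS) as h2.
    rewrite E1, E2 in h1. rewrite E1, E2 in h2. simpl in h1, h2.
    pose proof (Hmid q pDS v2 v1 E2 E1) as hm.
    pose proof (ER_le_trans _ _ _ (HpDS _) hm) as h3. rewrite E1 in h3. simpl in h3.
    pose proof (hinner_pos (RmH m) (rm_add q (rm_opp pDS))) as hp. simpl in hp.
    assert (Hz : rm_inner (rm_add q (rm_opp pDS)) (rm_add q (rm_opp pDS)) = 0).
    { apply Rle_antisym; auto.
      assert (kappa / 8 * rm_inner (rm_add q (rm_opp pDS)) (rm_add q (rm_opp pDS)) <= 0) by lra.
      apply Rmult_le_reg_l with (kappa / 8). lra. lra. }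
    apply (hsub_zero_eq (RmH m)). apply (hinner_def (RmH m)). exact Hz.
  - exact Hpart2.
  - intros Rb eps p ps HRb HD Heps Erho Ekap Hp Hps Hn.
    pose proof (Hpart2 p ps Hp Hps) as h.
    assert (E : 2 * rho / kappa * Df f = Rb ^ 2).
    { rewrite Erho, Ekap. field. repeat split; try lra; try (apply pow_nonzero; lra). }
    rewrite E in h.
    assert (0 <= rm_norm ps) by (unfold rm_norm; apply sqrt_pos).
    assert (0 <= rm_norm p) by (unfold rm_norm; apply sqrt_pos).
    assert (rm_norm ps ^ 2 <= Rb ^ 2) by (apply pow_incr; lra).
    assert (Es : (sqrt 2 * Rb) ^ 2 = 2 * Rb ^ 2) by (rewrite Rpow_mult_distr, pow2_sqrt; lra).
    assert (0 <= sqrt 2 * Rb) by (pose proof (sqrt_pos 2); nra).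
    apply Rsqr_incr_0; auto. unfold Rsqr.
    replace (rm_norm p * rm_norm p) with (rm_norm p ^ 2) by ring.
    replace (sqrt 2 * Rb * (sqrt 2 * Rb)) with ((sqrt 2 * Rb) ^ 2) by ring. lra.
Qed.
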